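(* For every $d\in\mathbb{Z}^+$, every 1-aware population protocol computing the predicate $R\colon\mathbb{Z}^+\to\{0,1\}$, $R(n)=\mathbb{I}\{n\ge d\}$ (i.e. $R(n)=1$ if $n\ge d$ and $R(n)=0$ otherwise), has at least $\log_2 d+1$ states.
   Context: A population protocol is a tuple $\Pi=\langle Q,Q_0,Q_1,q_{init},\delta\rangle$ where $Q$ is a finite set of states, $Q=Q_0\sqcup Q_1$ (disjoint union), $q_{init}\in Q$ is the initial state, and $\delta\colon Q^2\to 2^{Q^2}\setminus\{\varnothing\}$ is the transition function. For $n\in\mathbb{Z}^+$, an $n$-size configuration is a function $C\colon[n]\to Q$, where $[n]=\{1,\dots,n\}$; the initial configuration $I_n$ maps every element to $q_{init}$. A pair $(C_1,C_2)$ of $n$-size configurations is a transition if there are distinct $i,j\in[n]$ with $(C_2(i),C_2(j))\in\delta(C_1(i),C_1(j))$ and $C_2(k)=C_1(k)$ for all $k\ne i,j$ (the pair $(i,j)$ is ordered). $D$ is reachable from $C$ if there is a finite sequence $C=C_1,\dots,C_k=D$ ($k\ge1$) of configurations with each $(C_i,C_{i+1})$ a transition. An execution is an infinite sequence $(C_i)_{i\ge1}$ with $C_1=I_n$ for some $n$ and each $(C_i,C_{i+1})$ a transition; it is fair if whenever a configuration $C$ occurs infinitely often in it and $D$ is reachable from $C$, then $D$ also occurs infinitely often. $\Pi$ is a 1-aware population protocol computing $R\colon\mathbb{Z}^+\to\{0,1\}$ if for every $n\in\mathbb{Z}^+$: if $R(n)=0$ then every configuration $C$ reachable from $I_n$ satisfies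 $C([n])\subseteq Q_0$; and if $R(n)=1$ then for every fair execution $(C_i)_{i\ge1}$ with $C_1=I_n$ there is $i_0$ such that $C_i([n])\subseteq Q_1$ for all $i\ge i_0$. The number of states of $\Pi$ is $|Q|$. *)

(* Defs.v *)
From mathcomp Require Import all_boot.
From Stdlib Require Import Reals.
Set Implicit Arguments. Unset Strict Implicit. Unset Printing Implicit Defensive.

(* Q = Q0 ⊔ Q1 is encoded by the boolean predicate [pp_out1] (Q1 = states with
   pp_out1 q = true, Q0 = the rest), which is exactly a disjoint partition. *)
Record protocol (Q : finType) := Protocol {
  pp_out1 : pred Q;
  pp_init : Q;
  pp_delta : Q -> Q -> {set Q * Q};
  pp_delta_ne : forall p q, pp_delta p q != set0
}.

Definition config (Q : finType) (n : nat) := 'I_n -> Q.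

Definition init_config (Q : finType) (P : protocol Q) (n : nat) : config Q n :=
  fun _ => pp_init P.

Definition transition (Q : finType) (P : protocol Q) (n : nat)
  (C1 C2 : config Q n) : Prop :=
  exists i j : 'I_n, i <> j /\
    (C2 i, C2 j) \in pp_delta P (C1 i) (C1 j) /\
    (forall k, k <> i -> k <> j -> C2 k = C1 k).

Inductive reachable (Q : finType) (P : protocol Q) (n : nat)
  : config Q n -> config Q n -> Prop :=
| reach_refl C : reachable P C C
| reach_step C1 C2 C3 : transition P C1 C2 -> reachable P C2 C3 ->
    reachable P C1 C3.

Definition conf_eq (Q : finType) (n : nat) (C D : config Q n) : Prop :=
  forall k, C k = D k.

Definition occurs_inf_often (Q : finType) (n : nat)
  (E : nat -> config Q n) (C : config Q n) : Prop :=
  forall m, exists i, m <= i /\ conf_eq (E i) C.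

Definition execution (Q : finType) (P : protocol Q) (n : nat)
  (E : nat -> config Q n) : Prop :=
  conf_eq (E 0) (@init_config Q P n) /\ forall i, transition P (E i) (E i.+1).

Definition fair (Q : finType) (P : protocol Q) (n : nat)
  (E : nat -> config Q n) : Prop :=
  forall C D, occurs_inf_often E C -> reachable P C D -> occurs_inf_often E D.

Definition all_in (Q : finType) (n : nat) (C : config Q n) (S : pred Q) : Prop :=
  forall k, S (C k).

Definition one_aware_computes (Q : finType) (P : protocol Q)
  (R : nat -> bool) : Prop :=
  forall n, 0 < n ->
    (R n = false -> forall C, reachable P (@init_config Q P n) C ->
        all_in C (predC (pp_out1 P))) /\
    (R n = true -> forall E : nat -> config Q n, execution P E -> fair P E ->
        exists i0, forall i, i0 <= i -> all_in (E i) (pp_out1 P)).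

(* Main.v *)
Require Import Defs.
From mathcomp Require Import all_boot.
From Stdlib Require Import Reals Lra FunctionalExtensionality ClassicalEpsilon.
Set Implicit Arguments. Unset Strict Implicit. Unset Printing Implicit Defensive.

Section PP.
Variables (Q : finType) (P : protocol Q).

Lemma reach_trans n (C D E : config Q n) :
  reachable P C D -> reachable P D E -> reachable P C E.
Proof. by elim=> [//|C1 C2 C3 t _ IH] /IH; apply: reach_step. Qed.

Lemma reach_snoc n (C D E : config Q n) :
  reachable P C D -> transition P D E -> reachable P C E.
Proof. move=> h t; apply: reach_trans h _; apply: reach_step t _; exact: reach_refl. Qed.

Definition upd n (C : config Q n) (a b : 'I_n) (u v : Q) : config Q n :=
  fun k => if k == a then u else if k == b then v else C k.

Lemma upd_trans n (C : config Q n) a b u v : a != b ->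
  (u, v) \in pp_delta P (C a) (C b) -> transition P C (upd C a b u v).
Proof.
move=> ab h; exists a, b; split; first exact/eqP.
rewrite /upd eqxx eq_sym (negbTE ab) eqxx; split=> // k /eqP ka /eqP kb.
by rewrite (negbTE ka) (negbTE kb).
Qed.

Fixpoint T (i : nat) : {set Q} :=
  if i is i'.+1 then
    T i' :|: [set x | [exists p in T i', exists p' in T i', exists y,
       ((x, y) \in pp_delta P p p') || ((y, x) \in pp_delta P p p')]]
  else [set pp_init P].

Lemma subset_size (S : finType) (A : {set S}) k :
  k <= #|A| -> exists2 B : {set S}, B \subset A & #|B| = k.
Proof.
elim: k => [_|k IH hk]; first by exists set0; rewrite ?sub0set ?cards0.
case: (IH (ltnW hk)) => B sBA cB.
have : #|B| < #|A| by rewrite cB.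
move=> lt; have : B \proper A by rewrite properEcard sBA.
case/properP=> _ [x xA xB].
exists (x |: B); first by rewrite subUset sub1set xA.
by rewrite cardsU1 xB cB.
Qed.

Lemma T_sub i : T i \subset T i.+1.
Proof. by rewrite /= subsetUl. Qed.

Lemma T_stab : exists2 K, K < #|Q| & T K = T K.+1.
Proof.
case: (boolP [exists K : 'I_#|Q|, T K == T K.+1]).
  by case/existsP=> K /eqP h; exists K.
rewrite negb_exists => /forallP hne.
have : forall K, K <= #|Q| -> K < #|T K|.
  elim=> [_|K IH hK]; first by rewrite /= cards1.
  apply: leq_ltn_trans (IH (ltnW hK)) _; apply: proper_card; rewrite properEneq T_sub andbT.
  by move: (hne (Ordinal hK)); rewrite /= eq_sym.
move/(_ #|Q| (leqnn _)); by rewrite ltnNge max_card.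
Qed.

Lemma cover i : forall n (A : {set 'I_n}) (C0 : config Q n), expn 2 i <= #|A| ->
  (forall a, a \in A -> C0 a = pp_init P) -> forall q, q \in T i ->
  exists C, reachable P C0 C /\ (forall k, k \notin A -> C k = C0 k) /\
    exists2 a, a \in A & C a = q.
Proof.
elim: i => [|i IH] n A C0 hA hI q.
  rewrite /= inE => /eqP ->.
  have : 0 < #|A| by rewrite expn0 in hA.
  case/card_gt0P=> a aA; exists C0; split; first exact: reach_refl.
  by split=> //; exists a => //; rewrite hI.
rewrite /= inE => /orP [qT|].
  by apply: (IH n A C0) => //; apply: leq_trans hA; rewrite leq_exp2l.
rewrite inE => /existsP [p /andP [pT /existsP [p' /andP [p'T /existsP [y hy]]]]].
have [A1 sA1 cA1] : exists2 A1 : {set 'I_n}, A1 \subset A & #|A1| = expn 2 i.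
  by apply: subset_size; apply: leq_trans hA; rewrite leq_exp2l.
set A2 := A :\: A1.
have cA2 : expn 2 i <= #|A2|.
  rewrite cardsD (setIidPr sA1) cA1 leq_subRL; last by rewrite -cA1 subset_leq_card.
  by rewrite addnn -mul2n -expnS.
have [C1 [r1 [o1 [a a1 Ca]]]] := IH n A1 C0 (eq_leq (esym cA1))
  (fun a h => hI a (subsetP sA1 a h)) p pT.
have [C2 [r2 [o2 [b b2 Cb]]]] := IH n A2 C1 cA2
  (fun b h => ltac:(move: h; rewrite inE => /andP [nb1 bA];
     rewrite o1 // hI //)) p' p'T.
have aA2 : a \notin A2 by rewrite inE a1.
have ab : a != b by apply: contraNneq aA2 => ->.
have C2a : C2 a = p by rewrite o2 // Ca.
have [u [v [uv hq]]] : exists u v, (u, v) \in pp_delta P (C2 a) (C2 b) /\ (u = q \/ v = q).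
  rewrite C2a Cb; case/orP: hy => h; [exists q, y | exists y, q]; by auto.
exists (upd C2 a b u v); split.
  apply: reach_snoc (upd_trans ab uv).
  exact: reach_trans r1 r2.
split.
  move=> k kA; rewrite /upd.
  have kA1 : k \notin A1 by apply: contra kA; apply: (subsetP sA1).
  have kA2 : k \notin A2 by rewrite inE negb_and kA orbT.
  have -> : (k == a) = false by apply/eqP => e; move: kA1; rewrite e a1.
  have -> : (k == b) = false by apply/eqP => e; move: kA2; rewrite e b2.
  by rewrite o2 // o1.
case: hq => <-.
  by exists a; [exact: (subsetP sA1) | rewrite /upd eqxx].
exists b; first by move: b2; rewrite inE => /andP [].
by rewrite /upd eq_sym (negbTE ab) eqxx.
Qed.

Lemma T_closed K : T K = T K.+1 -> forall n (C D : config Q n), reachable P C D ->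
  (forall k, C k \in T K) -> forall k, D k \in T K.
Proof.
move=> hK n C D; elim=> [//|C1 C2 C3 [i [j [_ [hij ho]]]] _ IH] h1; apply: IH => k.
have clo : forall x y, (x, y) \in pp_delta P (C1 i) (C1 j) -> (x \in T K) && (y \in T K).
  move=> x y hxy; rewrite hK /= !inE; apply/andP; split; apply/orP; right;
  apply/existsP; exists (C1 i); rewrite h1 /=; apply/existsP; exists (C1 j);
  rewrite h1 /=; apply/existsP; [exists y | exists x]; by rewrite hxy ?orbT.
have /andP [ci cj] := clo _ _ hij.
case: (eqVneq k i) => [->//|ki]; case: (eqVneq k j) => [->//|kj].
by rewrite ho //; apply/eqP.
Qed.

Definition walk n (w : nat -> config Q n) k := forall i, i < k -> transition P (w i) (w i.+1).

Lemma reach_walk n (C D : config Q n) : reachable P C D ->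
  exists k w, w 0 = C /\ w k = D /\ walk w k.
Proof.
elim=> [C'|C1 C2 C3 t _ [k [w [w0 [wk ww]]]]].
  by exists 0, (fun _ => C'); split.
exists k.+1, (fun i => if i is i'.+1 then w i' else C1); split=> //; split=> //.
by case=> [_|i hi] /=; [rewrite w0 | apply: ww].
Qed.

Lemma walk_reach n (w : nat -> config Q n) k : walk w k -> forall j, j <= k -> reachable P (w 0) (w j).
Proof.
move=> ww; elim=> [_|j IH hj]; first exact: reach_refl.
by apply: reach_snoc (IH (ltnW hj)) (ww j hj).
Qed.

Definition wcat n (w1 : nat -> config Q n) k1 w2 : nat -> config Q n :=
  fun i => if i <= k1 then w1 i else w2 (i - k1).

Lemma wcat_l n (w1 : nat -> config Q n) k1 w2 i : i <= k1 -> wcat w1 k1 w2 i = w1 i.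
Proof. by rewrite /wcat => ->. Qed.

Lemma wcat_r n (w1 : nat -> config Q n) k1 w2 j : w1 k1 = w2 0 -> wcat w1 k1 w2 (k1 + j) = w2 j.
Proof.
rewrite /wcat => e; case: j => [|j]; first by rewrite addn0 leqnn.
by rewrite addnS ltnNge leq_addr /= subSn ?leq_addr // addKn.
Qed.

Lemma wcat_walk n (w1 : nat -> config Q n) k1 w2 k2 : walk w1 k1 -> walk w2 k2 ->
  w1 k1 = w2 0 -> walk (wcat w1 k1 w2) (k1 + k2).
Proof.
move=> h1 h2 e i hi; case: (ltnP i k1) => h.
  by rewrite !wcat_l // ?(ltnW h) //; apply: h1.
have [j ej] : exists j, i = k1 + j by exists (i - k1); rewrite subnKC.
subst i; rewrite -addnS !wcat_r //; apply: h2; by rewrite -(ltn_add2l k1).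
Qed.

Lemma wcat0 n (w1 : nat -> config Q n) k1 w2 : wcat w1 k1 w2 0 = w1 0.
Proof. by rewrite wcat_l. Qed.

Lemma wcat_end n (w1 : nat -> config Q n) k1 w2 k2 : w1 k1 = w2 0 ->
  wcat w1 k1 w2 (k1 + k2) = w2 k2.
Proof. exact: wcat_r. Qed.

Lemma some_trans n (B : config Q n) : 1 < n -> exists B', transition P B B'.
Proof.
move=> hn.
pose i0 : 'I_n := Ordinal (ltnW hn). pose j0 : 'I_n := Ordinal hn.
have /set0Pn [[u v] uv] := pp_delta_ne P (B i0) (B j0).
by exists (upd B i0 j0 u v); apply: upd_trans.
Qed.

Lemma cycle_visit n (B : config Q n) : 1 < n ->
  (forall D, reachable P B D -> reachable P D B) ->
  forall s : list (config Q n), (forall D, List.In D s -> reachable P B D) ->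
  exists k w, 0 < k /\ w 0 = B /\ w k = B /\ walk w k /\
    forall D, List.In D s -> exists2 j, j <= k & w j = D.
Proof.
move=> hn bot; elim=> [_|D s IH hs].
  have [B' t] := some_trans B hn.
  have r : reachable P B B' by apply: reach_step t (reach_refl _ _).
  have [k2 [w2 [w20 [w2k ww2]]]] := reach_walk (bot _ r).
  pose w1 := fun i : nat => if i is 0 then B else B'.
  exists (1 + k2), (wcat w1 1 w2); split=> //; split; first by rewrite wcat0.
  split; first by rewrite wcat_end.
  split=> //; apply: wcat_walk => //; by case=> //= _; rewrite w20.
have [k [w [k0 [w0 [wk [ww vis]]]]]] := IH (fun E h => hs E (or_intror h)).
have rD : reachable P B D by apply: hs; left.
have [k1 [w1 [w10 [w1k ww1]]]] := reach_walk rD.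
have [k2 [w2 [w20 [w2k ww2]]]] := reach_walk (bot _ rD).
have e1 : w1 k1 = w2 0 by rewrite w1k w20.
have e2 : wcat w1 k1 w2 (k1 + k2) = w 0 by rewrite wcat_end // w2k w0.
exists (k1 + k2 + k), (wcat (wcat w1 k1 w2) (k1 + k2) w); split.
  by rewrite addn_gt0 k0 orbT.
split; first by rewrite !wcat0.
split; first by rewrite wcat_end.
split; first by apply: wcat_walk => //; apply: wcat_walk.
move=> E [<-|hE].
  exists k1; first by rewrite -addnA leq_addr.
  by rewrite wcat_l ?leq_addr // wcat_l.
have [j hj <-] := vis E hE.
by exists (k1 + k2 + j); [rewrite leq_add2l | rewrite wcat_r].
Qed.

Definition bP (A : Prop) : bool := if excluded_middle_informative A then true else false.
Lemma bPE (A : Prop) : bP A <-> A.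
Proof. by rewrite /bP; case: excluded_middle_informative. Qed.

Lemma In_mem (S : eqType) (x : S) s : List.In x s -> x \in s.
Proof. by elim: s => //= y s IH [->|/IH h]; rewrite inE ?eqxx ?h ?orbT. Qed.
Lemma mem_In (S : eqType) (x : S) s : x \in s -> List.In x s.
Proof. by elim: s => //= y s IH; rewrite inE => /orP [/eqP ->|/IH h]; [left|right]. Qed.

Lemma ffK n (D : config Q n) : ((finfun D : {ffun 'I_n -> Q}) : config Q n) = D.
Proof. by apply: functional_extensionality => x; rewrite ffunE. Qed.

Lemma fair_exists n : 1 < n -> exists E : nat -> config Q n, execution P E /\ fair P E.
Proof.
move=> hn.
set I := @init_config Q P n.
pose RS (f : {ffun 'I_n -> Q}) := [set g : {ffun 'I_n -> Q} | bP (reachable P f g)].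
have Pi0 : bP (reachable P I (finfun I : {ffun 'I_n -> Q})).
  by apply/bPE; rewrite ffK; apply: reach_refl.
case: (@arg_minnP _ (finfun I) (fun b : {ffun 'I_n -> Q} => bP (reachable P I b)) (fun b => #|RS b|) Pi0) => Bf /bPE hB hmin.
set B : config Q n := Bf.
have bot : forall D, reachable P B D -> reachable P D B.
  move=> D rD; apply: NNPP => nDB.
  have rID : reachable P I D by apply: reach_trans hB rD.
  have : #|RS Bf| <= #|RS (finfun D)| by apply: hmin; apply/bPE; rewrite ffK.
  apply/negP; rewrite -ltnNge; apply: proper_card; apply/properP; split.
    apply/subsetP => g; rewrite !inE => /bPE; rewrite ffK => h; apply/bPE.
    exact: reach_trans rD h.
  exists Bf; rewrite !inE; first by apply/bPE; apply: reach_refl.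
  by apply/negP => /bPE; rewrite ffK.
pose s := map (fun f : {ffun 'I_n -> Q} => (f : config Q n)) (enum (RS Bf)).
have hs : forall D, List.In D s -> reachable P B D.
  move=> D /List.in_map_iff [f [<- /In_mem]]; rewrite mem_enum inE => /bPE //.
have [k [c [k0 [c0 [ck [cw vis]]]]]] := cycle_visit hn bot hs.
have [r [p [p0 [pr pw]]]] := reach_walk (hB : reachable P I B).
pose E := fun i => if i < r then p i else c ((i - r) %% k).
have Ecyc : forall j, E (r + j) = c (j %% k).
  by move=> j; rewrite /E ltnNge leq_addr /= addKn.
exists E; split.
  split.
    move=> x; rewrite /E; case: ifP => h0; first by rewrite p0.
    have r0 : r = 0 by move: h0; case: (r) => //.
    rewrite sub0n mod0n; suff -> : c 0 = p 0 by rewrite p0.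
    by rewrite c0; rewrite r0 in pr; rewrite pr.
  move=> i; case: (ltnP i.+1 r) => h1.
    by rewrite /E h1 (ltnW h1); apply: pw; apply: ltnW.
  case: (ltnP i r) => h2.
    have ei : i.+1 = r by apply/eqP; rewrite eqn_leq h1 h2.
    rewrite /E h2 ei ltnn subnn mod0n c0 -pr -ei; exact: pw.
  have [j ej] : exists j, i = r + j by exists (i - r); rewrite subnKC.
  subst i; rewrite -addnS !Ecyc modnS.
  have jk : j %% k < k by rewrite ltn_mod.
  case: ifP => hd.
    have : (j %% k).+1 = k.
      have e : (j %% k).+1 %% k = 0.
        by rewrite -addn1 modnDml addn1; apply/eqP; exact: hd.
      case: (ltnP (j %% k).+1 k) => h3; first by rewrite modn_small in e.
      by apply/eqP; rewrite eqn_leq jk h3.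
    move=> e; rewrite c0 -ck -{2}e; exact: cw.
  exact: cw.
move=> C D occ rCD m.
have [i [ri eq]] := occ r.
have eC : E i = C by apply: functional_extensionality.
have [j ej] : exists j, i = r + j by exists (i - r); rewrite subnKC.
subst i; rewrite Ecyc in eC.
have rBC : reachable P B C by rewrite -eC -c0; apply: (walk_reach cw); rewrite ltnW // ltn_mod.
have rBD := reach_trans rBC rCD.
have inD : List.In D s.
  rewrite -(ffK D); apply: List.in_map; apply: mem_In.
  by rewrite mem_enum inE; apply/bPE; rewrite ffK.
have [j' hj' cj'] := vis D inD.
have [j'' [jk cj'']] : exists j'', j'' < k /\ c j'' = D.
  case: (ltnP j' k) => h; first by exists j'.
  by exists 0; split=> //; rewrite c0 -ck; have -> : k = j' by apply/eqP; rewrite eqn_leq h hj'.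
exists (r + (m * k + j'')); split.
  by apply: leq_trans (leq_addl _ _); apply: leq_trans (leq_addr _ _); rewrite leq_pmulr.
by rewrite Ecyc modnMDl modn_small // cj''.
Qed.

End PP.
Lemma real_part (d c : nat) : 0 < d -> (d <= Nat.pow 2 c)%coq_nat ->
  (ln (INR d) / ln 2 + 1 <= INR c.+1)%R.
Proof.
move=> hd hle.
have l2 : (0 < ln 2)%R by rewrite -ln_1; apply: ln_increasing; lra.
have d0 : (0 < INR d)%R by apply: lt_0_INR; apply/ltP.
have h1 : (INR d <= 2 ^ c)%R.
  rewrite -(_ : INR 2 = 2%R) // -pow_INR; exact: le_INR.
have h2 : (ln (INR d) <= INR c * ln 2)%R.
  rewrite -ln_pow; last lra.
  case: (Rle_lt_or_eq_dec _ _ h1) => [h|->]; last lra.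
  by apply: Rlt_le; apply: ln_increasing.
rewrite S_INR.
have : (ln (INR d) / ln 2 <= INR c)%R.
  apply: (Rmult_le_reg_r (ln 2)) => //.
  rewrite /Rdiv Rmult_assoc Rinv_l; lra.
lra.
Qed.

Lemma expn_pow m k : expn m k = Nat.pow m k.
Proof. by elim: k => [|k IH]; rewrite ?expn0 // expnS IH. Qed.

Lemma T_mono (Q : finType) (P : protocol Q) i j : i <= j -> T P i \subset T P j.
Proof.
move=> hij; rewrite -(subnKC hij); elim: (j - i) => [|m IH]; first by rewrite addn0.
by rewrite addnS; apply: subset_trans IH (T_sub _ _).
Qed.

Theorem theorem2 (d : nat) (hd : 0 < d) (Q : finType) (P : protocol Q) :
  one_aware_computes P (fun n => d <= n) ->
  (ln (INR d) / ln 2 + 1 <= INR #|Q|)%R.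
Proof.
move=> hc.
have [K hK eK] := T_stab P.
suff hdK : d <= expn 2 K.
  have q0 : 0 < #|Q| by apply: leq_ltn_trans hK.
  rewrite -(prednK q0); apply: real_part => //; apply/leP; rewrite -expn_pow.
  apply: leq_trans hdK _; rewrite leq_exp2l //; by rewrite -ltnS prednK.
case: (boolP [exists q in T P K, pp_out1 P q]).
  case/existsP => q /andP [qT qo].
  rewrite leqNgt; apply/negP => hlt.
  have hA : expn 2 K <= #|[set: 'I_(expn 2 K)]| by rewrite cardsT card_ord.
  have [C [rC [_ [a _ Ca]]]] := cover hA (fun a _ => erefl (@init_config Q P (expn 2 K) a)) qT.
  have hf : (d <= expn 2 K) = false by rewrite leqNgt hlt.
  have := (hc (expn 2 K) (expn_gt0 _ _)).1 hf C rC a.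
  by rewrite /= Ca qo.
rewrite negb_exists => /forallP hno.
set n := maxn d 2.
have hn : 1 < n by rewrite leq_maxr.
have [E [ex fa]] := fair_exists P hn.
have [i0 H] := (hc n (ltnW hn)).2 (leq_maxl d 2) E ex fa.
have E0 : E 0 = @init_config Q P n by apply: functional_extensionality; exact: ex.1.
have rE : forall i, reachable P (@init_config Q P n) (E i).
  elim=> [|i IH]; first by rewrite E0; apply: reach_refl.
  exact: reach_snoc IH (ex.2 i).
have inT : forall k, E i0 k \in T P K.
  apply: (T_closed eK (rE i0)) => k.
  by apply: (subsetP (T_mono P (leq0n K))); rewrite /= inE.
pose a : 'I_n := Ordinal (ltnW hn).
have := hno (E i0 a); rewrite inT /= (H i0 (leqnn _) a).
by [].
Qed.
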